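(* Let $H$ be an edge-critical graph with $\chi(H)=r+1\ge3$. For every $r$-tuple $S=(S_1,\dots,S_r)$ of pairwise disjoint subsets of $[n]$ with $|S_1|>v_H$ and every graph $Q\subseteq K_n$ all of whose edges have both endpoints in $S_1$, \[ |\mathcal{F}_Q^{\mathrm{low}}[\mathrm{ext}(S)]|\ge\Big(1-\frac{v_H^2\,\Delta(Q)}{|S_1|-v_H}\Big)\cdot e(Q)\cdot N(H,K_S^+), \] where $K_S^+=\mathrm{ext}(S)\cup\{uv\}$ for two distinct vertices $u,v\in S_1$.
   Context: Graphs are identified with edge sets. $\mathrm{ext}(S)$ is the set of pairs of vertices meeting two distinct $S_i$. $\mathcal{H}$ is the family of all copies of $H$ in $K_n$ (as edge sets). $\mathcal{H}_Q^{\mathrm{low}}=\{A\in\mathcal{H}: |A\cap Q|=1 \text{ and } Q[V(A)] \text{ has exactly one edge}\}$ and $\mathcal{F}_Q^{\mathrm{low}}=\{A\setminus Q: A\in\mathcal{H}_Q^{\mathrm{low}}\}$. For a family $\mathcal{F}$ of edge sets and a graph $G$, $\mathcal{F}[G]=\{\omega\in\mathcal{F}:\omega\subseteq G\}$. $N(H,G)$ is the number of copies of $H$ in $G$; $\Delta(Q)$ is the maximum degree. *)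

(* Defs.v *)
From mathcomp Require Import all_boot all_order all_algebra.
Set Implicit Arguments. Unset Strict Implicit. Unset Printing Implicit Defensive.

(* Graphs on vertex set [n] = 'I_n are identified with their edge sets:
   sets of 2-element subsets of 'I_n. The pattern graph H is given as a
   symmetric irreflexive relation eH on a finite type V (v_H = #|V|). *)

Section Defs.
Variable V : finType.

Definition colorable (e : rel V) (k : nat) : Prop :=
  exists c : V -> 'I_k, forall x y, e x y -> c x != c y.

Definition chromatic_number (e : rel V) (k : nat) : Prop :=
  colorable e k /\ forall j, j < k -> ~ colorable e j.

Definition remove_edge (e : rel V) (x y : V) : rel V :=
  fun a b => e a b && ~~ (((a == x) && (b == y)) || ((a == y) && (b == x))).

Definition edge_critical (e : rel V) : Prop :=
  exists x y k, [/\ e x y, chromatic_number e k &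
                  exists j, j < k /\ chromatic_number (remove_edge e x y) j].

Variable n : nat.

Definition copies (e : rel V) : {set {set {set 'I_n}}} :=
  [set A : {set {set 'I_n}} | [exists f : {ffun V -> 'I_n},
      injectiveb f && (A == [set [set f p.1; f p.2] | p in [set p : V * V | e p.1 p.2]])]].

Definition Ncopies (e : rel V) (G : {set {set 'I_n}}) : nat :=
  #|[set A in copies e | A \subset G]|.

End Defs.

Section Defs2.
Variable n : nat.

Definition Kn : {set {set 'I_n}} := [set e : {set 'I_n} | #|e| == 2].

Definition vspan (A : {set {set 'I_n}}) : {set 'I_n} :=
  [set x : 'I_n | [exists e in A, x \in e]].

Definition induced (Q : {set {set 'I_n}}) (W : {set 'I_n}) : {set {set 'I_n}} :=
  [set e in Q | e \subset W].

Definition maxdeg (Q : {set {set 'I_n}}) : nat :=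
  \max_(x : 'I_n) #|[set e in Q | x \in e]|.

Definition ext (r : nat) (S : 'I_r -> {set 'I_n}) : {set {set 'I_n}} :=
  [set e : {set 'I_n} | [exists i : 'I_r, exists j : 'I_r, exists x : 'I_n,
     exists y : 'I_n, [&& i != j, x \in S i, y \in S j & e == [set x; y]]]].

Definition restrict (F : {set {set {set 'I_n}}}) (G : {set {set 'I_n}}) :=
  [set w in F | w \subset G].
End Defs2.

Definition H_low (V : finType) (n : nat) (e : rel V) (Q : {set {set 'I_n}}) :
  {set {set {set 'I_n}}} :=
  [set A in copies n e | (#|A :&: Q| == 1) && (#|induced Q (vspan A)| == 1)].

Definition F_low (V : finType) (n : nat) (e : rel V) (Q : {set {set 'I_n}}) :
  {set {set {set 'I_n}}} :=
  [set A :\: Q | A in H_low e Q].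

(* Main.v *)
Require Import Defs.
From mathcomp Require Import all_boot all_order all_algebra all_fingroup.
Import Order.TTheory GRing.Theory Num.Theory.
Set Implicit Arguments. Unset Strict Implicit. Unset Printing Implicit Defensive.

Lemma card_dep (T1 T2 : finType) (X : {set T1}) (g : T1 -> {set T2}) :
  #|[set p : T1 * T2 | (p.1 \in X) && (p.2 \in g p.1)]| = \sum_(x in X) #|g x|.
Proof.
rewrite -sum1_card.
under eq_bigl do rewrite inE.
rewrite -(pair_big_dep (fun x => x \in X) (fun x y => y \in g x) (fun _ _ => 1)) /=.
by apply: eq_bigr => x _; rewrite sum1_card.
Qed.

Lemma set2_eq (T : finType) (x y x' y' : T) : x != y ->
  [set x; y] = [set x'; y'] -> (x = x' /\ y = y') \/ (x = y' /\ y = x').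
Proof.
move=> nxy E.
have hx : x \in [set x'; y'] by rewrite -E set21.
have hy : y \in [set x'; y'] by rewrite -E set22.
have hx' : x' \in [set x; y] by rewrite E set21.
move: hx hy hx'; rewrite !inE => /orP[]/eqP hx /orP[]/eqP hy /orP[]/eqP hx'; subst;
  first [by rewrite eqxx in nxy | auto].
Qed.

Lemma color_of (V : finType) (eH : rel V) (eH_irr : irreflexive eH) (n r : nat)
  (A : {set {set 'I_n}}) (c : 'I_n -> 'I_r) :
  A \in copies n eH -> (forall x y, x != y -> [set x; y] \in A -> c x != c y) ->
  colorable eH r.
Proof.
rewrite inE => /existsP[f /andP[/injectiveP finj /eqP ->]] hc.
exists (fun x => c (f x)) => x y exy.
apply: hc.
  rewrite (inj_eq finj); apply: contraTneq exy => ->; by rewrite eH_irr.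
by apply/imsetP; exists (x, y) => //; rewrite inE.
Qed.

Definition col (n r : nat) (S : 'I_r -> {set 'I_n}) (i0 : 'I_r) (x : 'I_n) : 'I_r :=
  odflt i0 [pick i | x \in S i].

Lemma col_in (n r : nat) (S : 'I_r -> {set 'I_n}) (i0 : 'I_r)
  (Sdisj : forall i j : 'I_r, i != j -> [disjoint S i & S j]) x i :
  x \in S i -> col S i0 x = i.
Proof.
move=> xi; rewrite /col; case: pickP => [k xk|/(_ i)]; last by rewrite xi.
apply/eqP; apply: contraT => nki.
by have := Sdisj _ _ nki; rewrite disjoint_subset => /subsetP/(_ x xk); rewrite inE xi.
Qed.

Lemma ext_col (n r : nat) (S : 'I_r -> {set 'I_n}) (i0 : 'I_r)
  (Sdisj : forall i j : 'I_r, i != j -> [disjoint S i & S j]) x y :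
  x != y -> [set x; y] \in ext S -> col S i0 x != col S i0 y.
Proof.
move=> nxy; rewrite inE => /existsP[i /existsP[j /existsP[x' /existsP[y']]]].
case/and4P=> nij xi yj /eqP E.
case: (set2_eq nxy E) => -[-> ->].
  by rewrite (col_in _ Sdisj xi) (col_in _ Sdisj yj).
by rewrite (col_in _ Sdisj xi) (col_in _ Sdisj yj) eq_sym.
Qed.

Lemma e_in_copy (V : finType) (eH : rel V) (eH_irr : irreflexive eH) (n r : nat)
  (S : 'I_r -> {set 'I_n}) (i0 : 'I_r)
  (Sdisj : forall i j : 'I_r, i != j -> [disjoint S i & S j])
  (notcol : ~ colorable eH r) (A : {set {set 'I_n}}) e :
  A \in copies n eH -> A \subset ext S :|: [set e] -> e \in A.
Proof.
move=> Ac sA; apply: contraT => eA; case: notcol.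
apply: (color_of eH_irr (c := col S i0) Ac) => x y nxy xyA.
apply: ext_col => //.
have := subsetP sA _ xyA; rewrite !inE => /orP[//|/eqP E]; by rewrite -E xyA in eA.
Qed.

Lemma imset_set2 (aT rT : finType) (f : aT -> rT) (a b : aT) :
  [set f x | x in [set a; b]] = [set f a; f b].
Proof. by rewrite imsetU1 imset_set1. Qed.

Definition imgE n (s : {perm 'I_n}) (A : {set {set 'I_n}}) :=
  [set [set s x | x in g] | g : {set 'I_n} in A].

Lemma imgE_copy (V : finType) (eH : rel V) n (s : {perm 'I_n}) (A : {set {set 'I_n}}) :
  A \in copies n eH -> imgE s A \in copies n eH.
Proof.
rewrite !inE => /existsP[f /andP[/injectiveP finj /eqP ->]].
apply/existsP; exists [ffun x => s (f x)]; apply/andP; split.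
  by apply/injectiveP => x y; rewrite !ffunE => /perm_inj /finj.
apply/eqP; rewrite /imgE -imset_comp; apply: eq_imset => p /=.
by rewrite imset_set2 !ffunE.
Qed.

Lemma imgE_inj n (s : {perm 'I_n}) : injective (imgE s).
Proof. by apply: imset_inj; apply: imset_inj; apply: perm_inj. Qed.

Lemma vspan_img n (s : {perm 'I_n}) A x :
  x \in vspan A -> s x \in vspan (imgE s A).
Proof.
rewrite !inE => /existsP[g /andP[gA xg]].
apply/existsP; exists [set s y | y in g]; rewrite imset_f //.
by apply: imset_f.
Qed.

Lemma tperm_S (n r : nat) (S : 'I_r -> {set 'I_n})
  (Sdisj : forall i j : 'I_r, i != j -> [disjoint S i & S j]) i1 c w x i :
  c \in S i1 -> w \in S i1 -> x \in S i -> perm.tperm c w x \in S i.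
Proof.
move=> ci wi xi; case: tpermP => [E|E|//]; subst x.
  by rewrite -(col_in i1 Sdisj xi) (col_in i1 Sdisj ci).
by rewrite -(col_in i1 Sdisj xi) (col_in i1 Sdisj wi).
Qed.

Lemma ext_img (n r : nat) (S : 'I_r -> {set 'I_n})
  (Sdisj : forall i j : 'I_r, i != j -> [disjoint S i & S j]) i1 c w g :
  c \in S i1 -> w \in S i1 -> g \in ext S ->
  [set perm.tperm c w x | x in g] \in ext S.
Proof.
move=> ci wi; rewrite !inE => /existsP[i /existsP[j /existsP[x' /existsP[y']]]].
case/and4P=> nij xi yj /eqP ->; rewrite imset_set2.
apply/existsP; exists i; apply/existsP; exists j.
apply/existsP; exists (perm.tperm c w x'); apply/existsP; exists (perm.tperm c w y').
by rewrite nij !(tperm_S Sdisj ci wi) //=.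
Qed.

Lemma imgE_sub (n r : nat) (S : 'I_r -> {set 'I_n})
  (Sdisj : forall i j : 'I_r, i != j -> [disjoint S i & S j]) i1 c w (A : {set {set 'I_n}}) e :
  c \in S i1 -> w \in S i1 -> A \subset ext S :|: [set e] ->
  imgE (perm.tperm c w) A \subset ext S :|: [set [set perm.tperm c w x | x in e]].
Proof.
move=> ci wi /subsetP sA; apply/subsetP => h /imsetP[g gA ->].
have := sA _ gA; rewrite in_setU in_set1 => /orP[ge|/eqP->]; last by rewrite in_setU in_set1 eqxx orbT.
by rewrite in_setU (ext_img Sdisj ci wi ge).
Qed.

Lemma N_tperm (V : finType) (eH : rel V) (n r : nat) (S : 'I_r -> {set 'I_n})
  (Sdisj : forall i j : 'I_r, i != j -> [disjoint S i & S j]) i1 c w g :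
  c \in S i1 -> w \in S i1 ->
  Ncopies eH (ext S :|: [set g]) <=
  Ncopies eH (ext S :|: [set [set perm.tperm c w x | x in g]]).
Proof.
move=> ci wi; rewrite /Ncopies -(card_imset _ (@imgE_inj n (perm.tperm c w))).
apply: subset_leq_card; apply/subsetP => B /imsetP[A]; rewrite inE => /andP[Ac sA] ->.
by rewrite inE imgE_copy // (imgE_sub Sdisj ci wi).
Qed.

Lemma N_le (V : finType) (eH : rel V) (n r : nat) (S : 'I_r -> {set 'I_n})
  (Sdisj : forall i j : 'I_r, i != j -> [disjoint S i & S j]) i1 u v a b :
  u != v -> a != b -> u \in S i1 -> v \in S i1 -> a \in S i1 -> b \in S i1 ->
  Ncopies eH (ext S :|: [set [set u; v]]) <= Ncopies eH (ext S :|: [set [set a; b]]).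
Proof.
move=> nuv nab ui vi ai bi.
apply: (leq_trans (N_tperm eH Sdisj (c := u) (w := a) _ ui ai)).
rewrite imset_set2 tpermL.
set v' := perm.tperm u a v.
have v'i : v' \in S i1 by apply: (tperm_S Sdisj ui ai vi).
have nv'a : v' != a.
  by apply: contra nuv => /eqP E; apply/eqP; apply: (@perm_inj _ (perm.tperm u a)); rewrite /v' in E; rewrite E tpermL.
apply: (leq_trans (N_tperm eH Sdisj (c := v') (w := b) _ v'i bi)).
by rewrite imset_set2 tpermL tpermD // eq_sym.
Qed.

Lemma vspan_card (V : finType) (eH : rel V) n (A : {set {set 'I_n}}) :
  A \in copies n eH -> #|vspan A| <= #|V|.
Proof.
rewrite inE => /existsP[f /andP[_ /eqP ->]].
rewrite -cardsT; apply: (leq_trans _ (leq_imset_card (fun x => f x) [set: V])).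
apply: subset_leq_card; apply/subsetP => x; rewrite inE => /existsP[g /andP[]].
case/imsetP => p _ -> ; rewrite !inE => /orP[]/eqP->; by rewrite (imset_f (fun x => f x)) ?inE.
Qed.

Definition nbr n (Q : {set {set 'I_n}}) (d : 'I_n) := [set c | [set c; d] \in Q].

Lemma nbr_card n (Q : {set {set 'I_n}}) (HQ2 : forall g, g \in Q -> #|g| = 2) d :
  #|nbr Q d| <= maxdeg Q.
Proof.
apply: (@leq_trans #|[set g in Q | d \in g]|); last by apply: (leq_bigmax d).
have hne : forall c, c \in nbr Q d -> c != d.
  move=> c; rewrite inE; apply: contraTneq => ->.
  by apply/negP => /HQ2; rewrite setUid cards1.
rewrite -(card_in_imset (f := fun c => [set c; d])).
  apply: subset_leq_card; apply/subsetP => g /imsetP[c cn ->].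
  rewrite inE; apply/andP; split; last by rewrite !inE eqxx orbT.
  by move: cn; rewrite inE.
move=> c c' cn c'n E.
have : c \in [set c'; d] by rewrite -E set21.
by rewrite !inE (negbTE (hne c cn)) orbF => /eqP.
Qed.

Definition Ce (V : finType) (eH : rel V) n r (S : 'I_r -> {set 'I_n}) (e : {set 'I_n}) :=
  [set A in copies n eH | A \subset ext S :|: [set e]].

Definition wit n (S1 : {set 'I_n}) (Q : {set {set 'I_n}}) (e : {set 'I_n}) A (p : 'I_n * 'I_n) :=
  [&& p.2 \in S1, p.2 \notin e, p.2 \in vspan A, p.1 \in vspan A & [set p.2; p.1] \in Q].

Lemma e_vspan n (A : {set {set 'I_n}}) e : e \in A -> e \subset vspan A.
Proof. by move=> eA; apply/subsetP => x xe; rewrite inE; apply/existsP; exists e; rewrite eA. Qed.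

Lemma wit_ex (n r : nat) (S : 'I_r -> {set 'I_n}) i1
  (Q : {set {set 'I_n}}) (HQ : forall g, g \in Q -> #|g| = 2 /\ g \subset S i1) e (A : {set {set 'I_n}}) :
  e \in Q -> e \in A -> #|induced Q (vspan A)| != 1 -> exists p, wit (S i1) Q e A p.
Proof.
move=> eQ eA hb.
have eI : e \in induced Q (vspan A) by rewrite inE eQ e_vspan.
have [f fI nfe] : exists2 f, f \in induced Q (vspan A) & f != e.
  apply/exists_inP; apply: contraR hb => /exists_inPn H.
  apply/negPn/eqP; suff -> : induced Q (vspan A) = [set e] by rewrite cards1.
  apply/setP => g; rewrite [in RHS]inE.
  by apply/idP/idP => [gI|/eqP ->//]; have := H g gI; rewrite negbK.
move: fI; rewrite inE => /andP[fQ fsub].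
have [f2 fS] := HQ f fQ; have [e2 _] := HQ e eQ.
have [c cf ce] : exists2 c, c \in f & c \notin e.
  apply/exists_inP; apply: contraR nfe => /exists_inPn H.
  rewrite eqEcard f2 e2 leqnn andbT; apply/subsetP => x xf.
  by have := H x xf; rewrite negbK.
move/eqP/cards2P: f2 => [x [y [nxy fE]]].
move: cf; rewrite fE !inE => /orP[]/eqP Ec; subst c.
  exists (y, x); rewrite /wit /= ce (subsetP fS) ?fE ?set21 //.
  by rewrite (subsetP fsub) ?fE ?set21 // (subsetP fsub) ?fE ?set22 // -fE fQ.
exists (x, y); rewrite /wit /= ce (subsetP fS) ?fE ?set22 //.
by rewrite (subsetP fsub) ?fE ?set22 // (subsetP fsub) ?fE ?set21 // setUC -fE fQ.
Qed.

Lemma tperm_fix n (c w : 'I_n) (e : {set 'I_n}) :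
  c \notin e -> w \notin e -> [set perm.tperm c w x | x in e] = e.
Proof.
move=> ce we; rewrite -[RHS]imset_id; apply: eq_in_imset => x xe.
by rewrite tpermD //; apply: contraTneq xe => <-.
Qed.

Lemma bad_bound (V : finType) (eH : rel V) (eH_irr : irreflexive eH) (n r : nat)
  (S : 'I_r -> {set 'I_n})
  (Sdisj : forall i j : 'I_r, i != j -> [disjoint S i & S j]) i1
  (Q : {set {set 'I_n}}) (HQ : forall g, g \in Q -> #|g| = 2 /\ g \subset S i1)
  (notcol : ~ colorable eH r) e (eQ : e \in Q) :
  #|[set A in Ce eH S e | #|induced Q (vspan A)| != 1]| * (#|S i1| - #|V|)
  <= #|Ce eH S e| * (#|V| * (#|V| * maxdeg Q)).
Proof.
set C := Ce eH S e; set bad := [set A in C | _].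
pose Y := [set q : {set {set 'I_n}} * 'I_n | (q.1 \in C) && (q.2 \in vspan q.1)].
pose Z := fun A : {set {set 'I_n}} =>
  [set p : 'I_n * 'I_n | (p.1 \in vspan A) && (p.2 \in nbr Q p.1)].
pose T := [set t : ({set {set 'I_n}} * 'I_n) * ('I_n * 'I_n) |
             (t.1 \in Y) && (t.2 \in Z t.1.1)].
pose B2 := [set q : {set {set 'I_n}} * 'I_n |
             (q.1 \in bad) && (q.2 \in S i1 :\: vspan q.1)].
pose ch := fun A w => odflt (w, w) [pick p | wit (S i1) Q e A p].
pose phi := fun q : {set {set 'I_n}} * 'I_n =>
  ((imgE (perm.tperm (ch q.1 q.2).2 q.2) q.1, q.2), ch q.1 q.2).
have HC : forall A, A \in C -> A \in copies n eH /\ e \in A.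
  move=> A; rewrite inE => /andP[Ac sA]; split=> //.
  exact: (e_in_copy eH_irr i1 Sdisj notcol Ac sA).
have Hch : forall A w, A \in bad -> wit (S i1) Q e A (ch A w).
  move=> A w; rewrite inE => /andP[AC hb]; have [Ac eA] := HC A AC.
  rewrite /ch; case: pickP => [p //|H].
  have [p hp] := wit_ex HQ eQ eA hb; by have := H p; rewrite hp.
have HQ2 : forall g, g \in Q -> #|g| = 2 by move=> g /HQ[].
have h1 : #|bad| * (#|S i1| - #|V|) <= #|B2|.
  rewrite /B2 (card_dep bad (fun A => S i1 :\: vspan A)) -sum_nat_const.
  apply: leq_sum => A; rewrite inE => /andP[AC _].
  rewrite cardsD leq_sub2l //; apply: leq_trans (vspan_card (HC A AC).1).
  by apply: subset_leq_card; apply: subsetIr.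
have h2 : #|B2| <= #|T|.
  rewrite -(card_in_imset (f := phi)).
    apply: subset_leq_card; apply/subsetP => t /imsetP[[A w] qB ->].
    move: qB; rewrite in_set /= => /andP[Ab]; rewrite in_setD => /andP[wv wS].
    rewrite /phi /=.
    have := Hch A w Ab; case: (ch A w) => d c.
    rewrite /wit /= => /and5P[cS ce cv dv cdQ].
    have AC : A \in C by move: Ab; rewrite in_set => /andP[].
    have [Ac eA] := HC A AC.
    have sA : A \subset ext S :|: [set e] by move: AC; rewrite in_set => /andP[].
    have we : w \notin e by apply/negP => h; move/negP: (wv); apply; exact: (subsetP (e_vspan eA) w h).
    have ncd : c != d by apply: contraTneq cdQ => ->; apply/negP => /HQ2; rewrite setUid cards1.
    have nwd : w != d by apply/eqP => E; move: wv; rewrite E dv.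
    rewrite in_set /=; apply/andP; split; last first.
      rewrite in_set /=; apply/andP; split; last by rewrite in_set.
      by rewrite -{1}(tpermD ncd nwd) vspan_img.
    rewrite in_set /=; apply/andP; split.
      rewrite in_set; apply/andP; split; first exact: imgE_copy.
      by rewrite -(tperm_fix ce we) (imgE_sub Sdisj cS wS).
    by rewrite -{1}(tpermL c w) vspan_img.
  move=> [A1 w1] [A2 w2] _ _; rewrite /phi /= => -[E1 E2 E3].
  subst w2; rewrite E3 in E1; by rewrite (imgE_inj E1).
have h3 : #|T| <= #|Y| * (#|V| * maxdeg Q).
  rewrite /T (card_dep Y (fun q => Z q.1)) -sum_nat_const.
  apply: leq_sum => q; rewrite inE => /andP[qC _].
  rewrite /Z (card_dep (vspan q.1) (nbr Q)).
  apply: (@leq_trans (\sum_(d in vspan q.1) maxdeg Q)).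
    by apply: leq_sum => d _; apply: nbr_card.
  by rewrite sum_nat_const leq_mul2r (vspan_card (HC _ qC).1) orbT.
have h4 : #|Y| <= #|C| * #|V|.
  rewrite /Y (card_dep C (@vspan n)) -sum_nat_const.
  by apply: leq_sum => A AinC; apply: (vspan_card (HC A AinC).1).
apply: (leq_trans h1); apply: (leq_trans h2); apply: (leq_trans h3).
by rewrite [X in _ <= X]mulnA leq_mul2r h4 orbT.
Qed.

Lemma ext_notQ (n r : nat) (S : 'I_r -> {set 'I_n})
  (Sdisj : forall i j : 'I_r, i != j -> [disjoint S i & S j]) i1
  (Q : {set {set 'I_n}}) (HQ : forall g, g \in Q -> #|g| = 2 /\ g \subset S i1) g :
  g \in ext S -> g \notin Q.
Proof.
rewrite inE => /existsP[i /existsP[j /existsP[x /existsP[y]]]].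
case/and4P=> nij xi yj /eqP ->; apply/negP => /HQ[_ /subsetP sub].
have := col_in i1 Sdisj xi; have := col_in i1 Sdisj yj.
rewrite (col_in i1 Sdisj (sub _ (set21 _ _))) (col_in i1 Sdisj (sub _ (set22 _ _))).
by move=> Ej Ei; move: nij; rewrite -Ei -Ej eqxx.
Qed.

Definition good (V : finType) (eH : rel V) n r (S : 'I_r -> {set 'I_n}) (Q : {set {set 'I_n}}) (e : {set 'I_n}) :=
  [set A in Ce eH S e | #|induced Q (vspan A)| == 1].

Lemma good_inj (V : finType) (eH : rel V) (eH_irr : irreflexive eH) (n r : nat)
  (S : 'I_r -> {set 'I_n})
  (Sdisj : forall i j : 'I_r, i != j -> [disjoint S i & S j]) i1 i2 (ni : i2 != i1)
  (Q : {set {set 'I_n}}) (HQ : forall g, g \in Q -> #|g| = 2 /\ g \subset S i1)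
  (notcol : ~ colorable eH r) :
  {in [set p : {set 'I_n} * {set {set 'I_n}} | (p.1 \in Q) && (p.2 \in good eH S Q p.1)] &,
   injective (fun p => p.2 :\: Q)}.
Proof.
have key : forall e A, e \in Q -> A \in good eH S Q e ->
   [/\ A \in copies n eH, e \in A, A \subset ext S :|: [set e],
       induced Q (vspan A) = [set e] & forall g, g \in A -> g != e -> g \in ext S].
  move=> e A eQ; rewrite in_set => /andP[]; rewrite in_set => /andP[Ac sA] h1.
  have eA := e_in_copy eH_irr i1 Sdisj notcol Ac sA.
  split=> //.
    have eI : e \in induced Q (vspan A) by rewrite inE eQ e_vspan.
    move/cards1P: h1 => [x Ex]; move: eI; rewrite Ex in_set1 => /eqP -> //.
  by move=> g gA nge; have := subsetP sA g gA; rewrite in_setU in_set1 (negbTE nge) orbF.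
have diff : forall e A, e \in Q -> A \in good eH S Q e -> A :\: Q = A :\ e.
  move=> e A eQ Ag; have [_ eA _ _ Hx] := key e A eQ Ag.
  apply/setP => g; rewrite !inE; case: (g =P e) => [->|/eqP nge]; first by rewrite eQ.
  case gA: (g \in A); rewrite ?andbF //= andbT.
  exact: (ext_notQ Sdisj HQ (Hx g gA nge)).
move=> [e1 A1] [e2 A2] H1 H2 /= E; move: H1; rewrite in_set /= => /andP[e1Q A1g]; move: H2; rewrite in_set /= => /andP[e2Q A2g].
have [A1c e1A1 s1 I1 X1] := key e1 A1 e1Q A1g.
have [A2c e2A2 s2 I2 X2] := key e2 A2 e2Q A2g.
have [E12|ne] := eqVneq e1 e2.
  subst e2; rewrite (diff _ _ e1Q A1g) (diff _ _ e1Q A2g) in E.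
  by rewrite -(setD1K e1A1) -(setD1K e2A2) E.
exfalso.
have [z ze2 zn] : exists2 z, z \in e2 & z \notin vspan A1.
  apply/exists_inP; apply: contraNT ne => /exists_inPn H.
  have : e2 \in induced Q (vspan A1).
    rewrite inE e2Q; apply/subsetP => x xe; by have := H x xe; rewrite negbK.
  by rewrite I1 inE eq_sym.
have [e22 e2S] := HQ e2 e2Q.
apply: notcol.
pose c' := fun x => if x == z then i2 else col S i1 x.
apply: (color_of eH_irr (c := c') A2c) => x y nxy xyA.
have [Exy|nxye] := eqVneq [set x; y] e2.
  have xS : x \in S i1 by apply: (subsetP e2S); rewrite -Exy set21.
  have yS : y \in S i1 by apply: (subsetP e2S); rewrite -Exy set22.
  move: ze2; rewrite -Exy !inE /c' => /orP[]/eqP ->.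
    by rewrite [y == x]eq_sym (negbTE nxy) (col_in i1 Sdisj yS) eqxx.
  by rewrite eqxx (negbTE nxy) (col_in i1 Sdisj xS) eq_sym.
have xyext := X2 _ xyA nxye.
have : [set x; y] \in A1.
  have : [set x; y] \in A2 :\: Q by rewrite inE xyA (ext_notQ Sdisj HQ xyext).
  by rewrite -E inE => /andP[].
move=> /e_vspan /subsetP sv.
have xz : x != z by apply: contraNneq zn => <-; apply: sv; rewrite set21.
have yz : y != z by apply: contraNneq zn => <-; apply: sv; rewrite set22.
by rewrite /c' (negbTE xz) (negbTE yz) ext_col.
Qed.

Lemma good_F (V : finType) (eH : rel V) (eH_irr : irreflexive eH) (n r : nat)
  (S : 'I_r -> {set 'I_n})
  (Sdisj : forall i j : 'I_r, i != j -> [disjoint S i & S j]) i1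
  (Q : {set {set 'I_n}}) (HQ : forall g, g \in Q -> #|g| = 2 /\ g \subset S i1)
  (notcol : ~ colorable eH r) e A :
  e \in Q -> A \in good eH S Q e -> A :\: Q \in restrict (F_low eH Q) (ext S).
Proof.
move=> eQ; rewrite in_set => /andP[]; rewrite in_set => /andP[Ac sA] h1.
have eA := e_in_copy eH_irr i1 Sdisj notcol Ac sA.
have Hx : forall g, g \in A -> g != e -> g \in ext S.
  by move=> g gA nge; have := subsetP sA g gA; rewrite in_setU in_set1 (negbTE nge) orbF.
rewrite in_set; apply/andP; split.
  apply: imset_f; rewrite in_set Ac /= h1 andbT.
  apply/cards1P; exists e; apply/setP => g; rewrite in_setI in_set1.
  case: (g =P e) => [->|/eqP nge]; first by rewrite eA eQ.
  by case gA: (g \in A) => //=; apply/negbTE; apply: (ext_notQ Sdisj HQ (Hx g gA nge)).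
apply/subsetP => g; rewrite in_setD => /andP[gQ gA].
apply: Hx => //; by apply: contraNneq gQ => ->.
Qed.

Lemma card_split (T : finType) (C : {set T}) (P : pred T) :
  (#|[set A in C | P A]| + #|[set A in C | ~~ P A]| = #|C|)%N.
Proof.
rewrite -(cardsID [set A | P A] C).
have -> : [set A in C | P A] = C :&: [set A | P A].
  by apply/setP => A; rewrite in_setI !in_set.
have -> : [set A in C | ~~ P A] = C :\: [set A | P A].
  by apply/setP => A; rewrite in_setD !in_set andbC.
by [].
Qed.

From mathcomp Require Import ring lra.
Import Order.TTheory GRing.Theory Num.Theory.
Local Open Scope ring_scope.

Theorem mainTheorem11 (V : finType) (eH : rel V)
  (eH_sym : symmetric eH) (eH_irr : irreflexive eH)
  (r : nat) (hr : (1 < r)%N)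
  (Hcrit : edge_critical eH) (Hchi : chromatic_number eH r.+1)
  (n : nat) (S : 'I_r -> {set 'I_n})
  (Sdisj : forall i j : 'I_r, i != j -> [disjoint S i & S j])
  (HS1 : (#|V| < #|S (Ordinal (ltnW hr))|)%N)
  (Q : {set {set 'I_n}})
  (HQ : forall e, e \in Q -> e \in Kn n /\ e \subset S (Ordinal (ltnW hr)))
  (u v : 'I_n) (huv : u != v)
  (hu : u \in S (Ordinal (ltnW hr))) (hv : v \in S (Ordinal (ltnW hr))) :
  (1 - ((#|V| ^ 2 * maxdeg Q)%N)%:R
         / (#|S (Ordinal (ltnW hr))|%:R - #|V|%:R : rat))
    * #|Q|%:R * (Ncopies eH (ext S :|: [set [set u; v]]))%:R
  <= (#|restrict (F_low eH Q) (ext S)|)%:R.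
Proof.
set i1 := Ordinal (ltnW hr).
have ni : (Ordinal hr : 'I_r) != i1 by [].
have notcol : ~ colorable eH r by move=> h; exact: (Hchi.2 r (ltnSn r) h).
have HQ' : forall g, g \in Q -> #|g| = 2 /\ g \subset S i1.
  by move=> g /HQ[]; rewrite in_set => /eqP -> ->.
set N := Ncopies eH (ext S :|: [set [set u; v]]).
set x : rat := ((#|V| ^ 2 * maxdeg Q)%N)%:R / (#|S i1|%:R - #|V|%:R).
have den : 0 < #|S i1|%:R - #|V|%:R :> rat by rewrite subr_gt0 ltr_nat.
have key : forall e, e \in Q -> (1 - x) * N%:R <= #|good eH S Q e|%:R.
  move=> e eQ.
  have [e2 eS] := HQ' e eQ.
  move/eqP/cards2P: e2 => [a [b [nab Ee]]].
  have aS : a \in S i1 by apply: (subsetP eS); rewrite Ee set21.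
  have bS : b \in S i1 by apply: (subsetP eS); rewrite Ee set22.
  have hN : (N <= #|Ce eH S e|)%N.
    by rewrite Ee; apply: (N_le eH Sdisj huv nab hu hv aS bS).
  set C := Ce eH S e.
  have hsplit : (#|good eH S Q e| + #|[set A in C | #|induced Q (vspan A)| != 1]| = #|C|)%N.
    exact: (card_split C (fun A => #|induced Q (vspan A)| == 1)).
  have hb := bad_bound eH_irr Sdisj HQ' notcol eQ.
  have hbR : (#|[set A in C | #|induced Q (vspan A)| != 1]|)%:R <= x * #|C|%:R.
    rewrite /x mulrAC ler_pdivlMr // -natrB ?(ltnW HS1) // -!natrM ler_nat.
    apply: (leq_trans hb).
    rewrite [X in (_ <= X)%N](_ : _ = #|C| * (#|V| * (#|V| * maxdeg Q)))%N //.
    ring.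
  have goodR : (#|good eH S Q e|)%:R = #|C|%:R -
      (#|[set A in C | #|induced Q (vspan A)| != 1]|)%:R :> rat.
    by rewrite -hsplit natrD addrK.
  case: (lerP 0 (1 - x)) => hx.
    apply: (le_trans (_ : (1 - x) * N%:R <= (1 - x) * #|C|%:R)).
      by rewrite ler_wpM2l // ler_nat.
    rewrite goodR mulrBl mul1r; lra.
  apply: (le_trans (_ : _ <= 0)); last by apply: ler0n.
  by apply: mulr_le0_ge0; [apply: ltW | apply: ler0n].
have inj := good_inj eH_irr Sdisj ni HQ' notcol.
set P := [set p : {set 'I_n} * {set {set 'I_n}} | (p.1 \in Q) && (p.2 \in good eH S Q p.1)].
have hP : (#|P| <= #|restrict (F_low eH Q) (ext S)|)%N.
  rewrite -(card_in_imset inj); apply: subset_leq_card; apply/subsetP => w /imsetP[[e A] pP ->].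
  move: pP; rewrite in_set /= => /andP[eQ Ag].
  exact: (good_F eH_irr Sdisj HQ' notcol eQ Ag).
have cP : #|P| = (\sum_(e in Q) #|good eH S Q e|)%N := card_dep Q (good eH S Q).
apply: (le_trans (_ : _ <= #|P|%:R)); last by rewrite ler_nat.
rewrite cP natr_sum.
apply: (le_trans (_ : _ <= \sum_(e in Q) ((1 - x) * N%:R))); last first.
  by apply: ler_sum => e eQ; exact: key.
by rewrite sumr_const -[X in _ <= X]mulr_natr mulrAC.
Qed.
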